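(* Let $G\subset\mathrm{Diff}^1_+([0,1])$ be a group and let $\mathcal H=(h_n)_{n\in\mathbb N}$ be a sequence in $\mathrm{Diff}^1_+([0,1])$ such that $h_n g h_n^{-1}\to\mathrm{id}$ in the $C^1$-topology for every $g\in G$. Let $G_{\mathcal H}$ be the set of all $g\in\mathrm{Diff}^1_+([0,1])$ such that $h_n g h_n^{-1}\to\mathrm{id}$ in the $C^1$-topology. Then the completion $I^\infty(G)$ of $G$ is contained in $G_{\mathcal H}$; in particular $I^\infty(G)$ is a group of $C^1$-diffeomorphisms which is $C^1$-close to the identity.
   Context: (Such a $G$ is without linked fixed points.) A homeomorphism $h\in\mathrm{Homeo}_+([0,1])$ is induced by $g$ if $h(x)\in\{x,g(x)\}$ for every $x\in[0,1]$. For a group $G$, $I(G)$ is the group generated by all homeomorphisms induced by elements of $G$; $I^0(G)=G$, $I^{n+1}(G)=I(I^n(G))$, and the completion is $I^\infty(G)=\bigcup_n I^n(G)$. A group $G\subset \mathrm{Diff}^1_+([0,1])$ is $C^1$-close to the identity if there is a sequence $h_n\in \mathrm{Diff}^1_+([0,1])$ such that $h_n g h_n^{-1}\to \mathrm{id}$ in the $C^1$-topology for every $g\in G$. *)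

(* Defs.v *)
From Stdlib Require Import Reals.
Open Scope R_scope.

(* Maps of [0,1] are represented as functions R -> R that are the identity
   outside [0,1] (so composition and inversion are global operations). *)
Definition I01 (x : R) : Prop := 0 <= x <= 1.

Definition cont_on01 (f : R -> R) : Prop :=
  forall x, I01 x -> forall eps, 0 < eps -> exists delta, 0 < delta /\
    forall y, I01 y -> Rabs (y - x) < delta -> Rabs (f y - f x) < eps.

Definition has_deriv_on01 (f f' : R -> R) : Prop :=
  forall x, I01 x -> forall eps, 0 < eps -> exists delta, 0 < delta /\
    forall y, I01 y -> y <> x -> Rabs (y - x) < delta ->
      Rabs ((f y - f x) / (y - x) - f' x) < eps.

Definition C1_on01 (f : R -> R) : Prop :=
  exists f', has_deriv_on01 f f' /\ cont_on01 f'.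

Definition inverse_pair (f g : R -> R) : Prop :=
  forall x, f (g x) = x /\ g (f x) = x.

Definition homeo_plus (f : R -> R) : Prop :=
  (forall x, ~ I01 x -> f x = x) /\
  f 0 = 0 /\ f 1 = 1 /\
  (forall x y, I01 x -> I01 y -> x < y -> f x < f y) /\
  cont_on01 f /\
  (forall y, I01 y -> exists x, I01 x /\ f x = y).

Definition diff1_plus (f : R -> R) : Prop :=
  homeo_plus f /\ C1_on01 f /\ exists g, inverse_pair f g /\ C1_on01 g.

Definition conv_C1_id (u : nat -> R -> R) : Prop :=
  exists u' : nat -> R -> R, (forall n, has_deriv_on01 (u n) (u' n)) /\
    forall eps, 0 < eps -> exists N, forall n, (N <= n)%nat ->
      forall x, I01 x -> Rabs (u n x - x) < eps /\ Rabs (u' n x - 1) < eps.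

Definition is_group (G : (R -> R) -> Prop) : Prop :=
  G (fun x => x) /\
  (forall f g, G f -> G g -> G (fun x => f (g x))) /\
  (forall f, G f -> exists g, G g /\ inverse_pair f g).

Definition induced (h g : R -> R) : Prop :=
  homeo_plus h /\ forall x, I01 x -> h x = x \/ h x = g x.

Inductive gen_group (S : (R -> R) -> Prop) : (R -> R) -> Prop :=
| gen_base f : S f -> gen_group S f
| gen_id : gen_group S (fun x => x)
| gen_comp f g : gen_group S f -> gen_group S g -> gen_group S (fun x => f (g x))
| gen_inv f g : gen_group S f -> inverse_pair f g -> gen_group S g
| gen_ext f g : gen_group S f -> (forall x, f x = g x) -> gen_group S g.

Definition I_op (G : (R -> R) -> Prop) : (R -> R) -> Prop :=
  gen_group (fun h => exists g, G g /\ induced h g).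

Fixpoint I_iter (n : nat) (G : (R -> R) -> Prop) : (R -> R) -> Prop :=
  match n with
  | O => G
  | S m => I_op (I_iter m G)
  end.

Definition I_inf (G : (R -> R) -> Prop) : (R -> R) -> Prop :=
  fun f => exists n, I_iter n G f.

(* G_H, where hinv n is the inverse of h n *)
Definition G_H (h hinv : nat -> R -> R) (g : R -> R) : Prop :=
  diff1_plus g /\ conv_C1_id (fun n x => h n (g (hinv n x))).

Definition C1_close_to_id (G : (R -> R) -> Prop) : Prop :=
  exists h : nat -> R -> R, exists hinv : nat -> R -> R,
    (forall n, diff1_plus (h n)) /\ (forall n, inverse_pair (h n) (hinv n)) /\
    forall g, G g -> conv_C1_id (fun n x => h n (g (hinv n x))).

(* Main.v *)
Require Import Defs.
From Stdlib Require Import Reals Lra Psatz FunctionalExtensionality ClassicalEpsilon Classical.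
Open Scope R_scope.

Lemma lim_iff F D l x : limit1_in F D l x <-> forall eps, 0 < eps -> exists delta, 0<delta /\ forall y, D y -> Rabs (y - x) < delta -> Rabs (F y - l) < eps.
Proof.
  unfold limit1_in, limit_in; simpl; unfold Rdist; split; intros H eps He.
  - destruct (H eps He) as [d [Hd H']]. exists d; split; [lra|]. intros y Dy Hy. apply H'; tauto.
  - destruct (H eps He) as [d [Hd H']]. exists d; split; [lra|]. intros y [Dy Hy]. apply H'; tauto.
Qed.

Lemma lim_to F D l x : limit1_in F D l x -> forall eps, 0 < eps -> exists delta, 0<delta /\ forall y, D y -> Rabs (y - x) < delta -> Rabs (F y - l) < eps.
Proof. apply lim_iff. Qed.
Lemma lim_of F D l x : (forall eps, 0 < eps -> exists delta, 0<delta /\ forall y, D y -> Rabs (y - x) < delta -> Rabs (F y - l) < eps) -> limit1_in F D l x.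
Proof. apply lim_iff. Qed.

Definition D01 x := fun y => I01 y /\ y <> x.

Lemma deriv_iff f f' : has_deriv_on01 f f' <-> forall x, I01 x -> limit1_in (fun y => (f y - f x)/(y - x)) (D01 x) (f' x) x.
Proof.
  unfold has_deriv_on01; split; intros H x Hx; specialize (H x Hx).
  - apply lim_of. intros eps He; destruct (H eps He) as [d [Hd H']]; exists d; split; auto.
    intros y [Iy Ny] Hy; auto.
  - generalize (lim_to _ _ _ _ H); clear H; intro H. intros eps He; destruct (H eps He) as [d [Hd H']]; exists d; split; auto.
    intros y Iy Ny Hy; apply H'; auto; split; auto.
Qed.

Lemma deriv_to f f' : has_deriv_on01 f f' -> forall x, I01 x -> limit1_in (fun y => (f y - f x)/(y - x)) (D01 x) (f' x) x.
Proof. apply deriv_iff. Qed.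
Lemma deriv_of f f' : (forall x, I01 x -> limit1_in (fun y => (f y - f x)/(y - x)) (D01 x) (f' x) x) -> has_deriv_on01 f f'.
Proof. apply deriv_iff. Qed.

Lemma cont_iff f : cont_on01 f <-> forall x, I01 x -> limit1_in f I01 (f x) x.
Proof.
  unfold cont_on01; split; intros H x Hx; specialize (H x Hx).
  - apply lim_of. exact H.
  - generalize (lim_to _ _ _ _ H); clear H; intro H. exact H.
Qed.

Lemma cont_to f : cont_on01 f -> forall x, I01 x -> limit1_in f I01 (f x) x.
Proof. apply cont_iff. Qed.
Lemma cont_of f : (forall x, I01 x -> limit1_in f I01 (f x) x) -> cont_on01 f.
Proof. apply cont_iff. Qed.

Lemma lim_sub F D D' l x : (forall y, D' y -> D y) -> limit1_in F D l x -> limit1_in F D' l x.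
Proof.
  intros HD H; apply lim_of; generalize (lim_to _ _ _ _ H); clear H; intro H; intros eps He; destruct (H eps He) as [d [Hd H']]; exists d; split; auto.
Qed.

Lemma lim_ext F G D l x : (forall y, D y -> F y = G y) -> limit1_in F D l x -> limit1_in G D l x.
Proof.
  intros HD H; apply lim_of; generalize (lim_to _ _ _ _ H); clear H; intro H; intros eps He; destruct (H eps He) as [d [Hd H']]; exists d; split; auto.
  intros y Dy Hy; rewrite <- HD; auto.
Qed.

Lemma adh01 x : I01 x -> adhDa (D01 x) x.
Proof.
  intros Hx alp Ha. unfold D01, I01, Rdist in *.
  set (m := Rmin (alp/2) (1/2)).
  assert (0 < m) by (unfold m; apply Rmin_glb_lt; lra).
  assert (m <= alp/2) by apply Rmin_l. assert (m <= 1/2) by apply Rmin_r.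
  destruct (Rle_dec x (1/2)).
  - exists (x + m). split; [split; lra|]. replace (x+m-x) with m by ring. rewrite Rabs_right; lra.
  - exists (x - m). split; [split; lra|]. replace (x-m-x) with (-m) by ring. rewrite Rabs_Ropp, Rabs_right; lra.
Qed.

Lemma deriv_unique f f1 f2 : has_deriv_on01 f f1 -> has_deriv_on01 f f2 -> forall x, I01 x -> f1 x = f2 x.
Proof.
  intros H1 H2 x Hx.
  apply (single_limit (fun y => (f y - f x)/(y - x)) (D01 x)) with x; [apply adh01; auto | apply (deriv_to _ _ H1); auto | apply (deriv_to _ _ H2); auto].
Qed.

Ltac rabs_all := repeat (match goal with
 | |- context [Rabs ?a] => destruct (Rcase_abs a); [rewrite (Rabs_left a) by lra | rewrite (Rabs_right a) by lra]
 | H : context [Rabs ?a] |- _ => destruct (Rcase_abs a); [rewrite (Rabs_left a) in H by lra | rewrite (Rabs_right a) in H by lra]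
 end).

Lemma chain f f' g g' : has_deriv_on01 f f' -> has_deriv_on01 g g' -> (forall x, I01 x -> I01 (f x)) -> cont_on01 f -> has_deriv_on01 (fun x => g (f x)) (fun x => g' (f x) * f' x).
Proof.
 intros Hf Hg Hm Hc. apply deriv_of. intros x Hx.
 set (a := f x).
 set (phi := fun z => if Req_EM_T z a then g' a else (g z - g a)/(z - a)).
 assert (Hphi: limit1_in phi I01 (g' a) a).
 { apply lim_of. intros eps He. destruct (lim_to _ _ _ _ (deriv_to _ _ Hg a (Hm x Hx)) eps He) as [d [Hd H]]. exists d; split; auto. intros y Iy Hy. unfold phi. destruct (Req_EM_T y a). rewrite Rminus_diag, Rabs_R0; lra. apply H; auto. split; auto. }
 assert (Hcomp: limit1_in (fun y => phi (f y)) (D01 x) (g' a) x).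
 { apply lim_sub with (Dgf I01 I01 f). intros y [Iy _]; split; auto. apply limit_comp with a; auto. apply (cont_to _ Hc x Hx). }
 pose proof (limit_mul _ _ _ _ _ _ Hcomp (deriv_to _ _ Hf x Hx)) as H.
 eapply lim_ext; [|exact H]. intros y [Iy Ny]. simpl. unfold phi. destruct (Req_EM_T (f y) a).
 - unfold a in *. rewrite e. unfold Rdiv; ring.
 - unfold a in *. assert (f y - f x <> 0) by (intro; apply n; lra). assert (y - x <> 0) by (intro; apply Ny; lra). field; auto.
Qed.

Lemma cont_comp_mul f g' f' : cont_on01 f -> (forall x, I01 x -> I01 (f x)) -> cont_on01 g' -> cont_on01 f' -> cont_on01 (fun x => g' (f x) * f' x).
Proof.
  intros Hf Hm Hg Hf'. apply cont_of; intros x Hx. apply limit_mul.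
  - apply lim_sub with (Dgf I01 I01 f). intros y Iy; split; auto. apply limit_comp with (f x).
    apply (cont_to _ Hf x Hx). apply (cont_to _ Hg); auto.
  - apply (cont_to _ Hf'); auto.
Qed.

Lemma C1_comp f g : C1_on01 f -> C1_on01 g -> (forall x, I01 x -> I01 (f x)) -> cont_on01 f -> C1_on01 (fun x => g (f x)).
Proof.
  intros [f' [Hf Hf']] [g' [Hg Hg']] Hm Hc. exists (fun x => g' (f x) * f' x). split.
  apply chain; auto. apply cont_comp_mul; auto.
Qed.

Lemma mono_maps g : (forall x y, I01 x -> I01 y -> x < y -> g x < g y) -> g 0 = 0 -> g 1 = 1 -> forall x, I01 x -> I01 (g x).
Proof.
  intros Hm H0 H1 x [Hx0 Hx1]. unfold I01 in *. split.
  - destruct (Rle_lt_or_eq_dec _ _ Hx0) as [h|h]. rewrite <- H0. left; apply Hm; unfold I01; lra. subst; lra.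
  - destruct (Rle_lt_or_eq_dec _ _ Hx1) as [h|h]. rewrite <- H1. left; apply Hm; unfold I01; lra. subst; lra.
Qed.

Lemma mono_cont g : (forall x y, I01 x -> I01 y -> x < y -> g x < g y) -> g 0 = 0 -> g 1 = 1 -> (forall y, I01 y -> exists x, I01 x /\ g x = y) -> cont_on01 g.
Proof.
  intros Hm H0 H1 Hs x Hx eps He.
  pose proof (mono_maps g Hm H0 H1) as Mp.
  pose proof (Mp x Hx) as Gx. unfold I01 in *.
  set (t1 := Rmax 0 (g x - eps/2)). set (t2 := Rmin 1 (g x + eps/2)).
  assert (T1a : 0 <= t1) by apply Rmax_l. assert (T1b : g x - eps/2 <= t1) by apply Rmax_r.
  assert (T1c : t1 <= g x) by (unfold t1; apply Rmax_lub; lra).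
  assert (T2a : t2 <= 1) by apply Rmin_l. assert (T2b : t2 <= g x + eps/2) by apply Rmin_r.
  assert (T2c : g x <= t2) by (unfold t2; apply Rmin_glb; lra).
  destruct (Hs t1) as [a [Ia Ga]]. unfold I01; lra.
  destruct (Hs t2) as [b [Ib Gb]]. unfold I01; lra.
  unfold I01 in *.
  assert (Ha : a <= x). { destruct (Rle_dec a x); auto. assert (g x < g a) by (apply Hm; unfold I01; lra). lra. }
  assert (Hb : x <= b). { destruct (Rle_dec x b); auto. assert (g b < g x) by (apply Hm; unfold I01; lra). lra. }
  set (d1 := if Rlt_dec a x then x - a else 1). set (d2 := if Rlt_dec x b then b - x else 1).
  assert (D1 : 0 < d1) by (unfold d1; destruct (Rlt_dec a x); lra).
  assert (D2 : 0 < d2) by (unfold d2; destruct (Rlt_dec x b); lra).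
  exists (Rmin d1 d2). split. apply Rmin_glb_lt; auto.
  intros y Iy Hy. unfold I01 in Iy.
  assert (Hd1 : Rabs (y - x) < d1) by (eapply Rlt_le_trans; [exact Hy| apply Rmin_l]).
  assert (Hd2 : Rabs (y - x) < d2) by (eapply Rlt_le_trans; [exact Hy| apply Rmin_r]).
  destruct (Rtotal_order y x) as [Lt|[Eq|Gt]].
  - assert (g y < g x) by (apply Hm; unfold I01; lra).
    rewrite Rabs_left in Hd1 by lra.
    unfold d1 in Hd1. destruct (Rlt_dec a x).
    + assert (g a < g y) by (apply Hm; unfold I01; lra).
      rewrite Rabs_left by lra. lra.
    + assert (a = x) by lra. subst a.
      assert (g x = 0). { unfold t1, Rmax in Ga. destruct (Rle_dec 0 (g x - eps/2)); lra. }
      pose proof (Mp y ltac:(unfold I01; lra)). unfold I01 in *. lra.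
  - subst; rewrite Rminus_diag, Rabs_R0; lra.
  - assert (g x < g y) by (apply Hm; unfold I01; lra).
    rewrite Rabs_right in Hd2 by lra.
    unfold d2 in Hd2. destruct (Rlt_dec x b).
    + assert (g y < g b) by (apply Hm; unfold I01; lra).
      rewrite Rabs_right by lra. lra.
    + assert (b = x) by lra. subst b.
      assert (g x = 1). { unfold t2, Rmin in Gb. destruct (Rle_dec 1 (g x + eps/2)); lra. }
      pose proof (Mp y ltac:(unfold I01; lra)). unfold I01 in *. lra.
Qed.

Lemma homeo_maps f : homeo_plus f -> forall x, I01 x -> I01 (f x).
Proof. intros [_ [H0 [H1 [Hm _]]]]. apply mono_maps; auto. Qed.

Lemma homeo_comp f g : homeo_plus f -> homeo_plus g -> homeo_plus (fun x => f (g x)).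
Proof.
  intros Hf Hg. pose proof (homeo_maps f Hf) as Mf. pose proof (homeo_maps g Hg) as Mg.
  destruct Hf as [Of [F0 [F1 [Fm [Fc Fs]]]]]. destruct Hg as [Og [G0 [G1 [Gm [Gc Gs]]]]].
  split; [|split; [|split; [|split; [|split]]]].
  - intros x Hx. rewrite Og, Of; auto.
  - rewrite G0; auto.
  - rewrite G1; auto.
  - intros x y Hx Hy Hxy. apply Fm; auto.
  - apply cont_of; intros x Hx. apply lim_sub with (Dgf I01 I01 g). intros y Iy; split; auto.
    apply limit_comp with (g x). apply (cont_to _ Gc x Hx). apply (cont_to _ Fc); auto.
  - intros y Hy. destruct (Fs y Hy) as [z [Iz Fz]]. destruct (Gs z Iz) as [x [Ix Gx]]. exists x; split; auto. congruence.
Qed.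

Lemma homeo_inv f g : homeo_plus f -> inverse_pair f g -> homeo_plus g.
Proof.
  intros Hf Hp. pose proof (homeo_maps f Hf) as Mf.
  destruct Hf as [Of [F0 [F1 [Fm [Fc Fs]]]]].
  assert (Og : forall x, ~ I01 x -> g x = x).
  { intros x Hx. destruct (classic (I01 (g x))) as [I|I].
    - exfalso. apply Hx. destruct (Hp x) as [E _]. rewrite <- E. auto.
    - destruct (Hp x) as [E _]. rewrite Of in E; auto. }
  assert (Mg : forall x, I01 x -> I01 (g x)).
  { intros x Hx. destruct (classic (I01 (g x))) as [I|I]; auto. exfalso.
    destruct (Hp x) as [E _]. rewrite Of in E; auto. rewrite E in I; auto. }
  assert (G0 : g 0 = 0) by (rewrite <- F0 at 1; apply Hp).
  assert (G1 : g 1 = 1) by (rewrite <- F1 at 1; apply Hp).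
  assert (Gm : forall x y, I01 x -> I01 y -> x < y -> g x < g y).
  { intros x y Hx Hy Hxy. destruct (Rlt_dec (g x) (g y)) as [l|l]; auto. exfalso.
    destruct (Rle_lt_or_eq_dec (g y) (g x)) as [l2|l2]; [lra| |].
    - pose proof (Fm _ _ (Mg y Hy) (Mg x Hx) l2). rewrite (proj1 (Hp x)), (proj1 (Hp y)) in H. lra.
    - assert (f (g y) = f (g x)) by congruence. rewrite (proj1 (Hp x)), (proj1 (Hp y)) in H. lra. }
  split; [auto|split; [auto|split; [auto|split; [auto|split]]]].
  - apply mono_cont; auto. intros y Hy. exists (f y). split; auto. apply Hp.
  - intros y Hy. exists (f y). split; auto. apply Hp.
Qed.

Lemma homeo_has_inv f : homeo_plus f -> exists g, inverse_pair f g.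
Proof.
  intros Hf. pose proof (homeo_maps f Hf) as Mf.
  destruct Hf as [Of [F0 [F1 [Fm [Fc Fs]]]]].
  assert (H : forall y, exists x, (I01 y -> I01 x /\ f x = y) /\ (~ I01 y -> x = y)).
  { intros y. destruct (classic (I01 y)) as [I|I].
    - destruct (Fs y I) as [x [Ix Fx]]. exists x; split; auto. tauto.
    - exists y; split; tauto. }
  exists (fun y => proj1_sig (constructive_indefinite_description _ (H y))).
  intros x. split.
  - destruct (constructive_indefinite_description _ (H x)) as [z [Hz1 Hz2]]; simpl.
    destruct (classic (I01 x)) as [I|I]. apply Hz1; auto. rewrite Hz2; auto.
  - destruct (constructive_indefinite_description _ (H (f x))) as [z [Hz1 Hz2]]; simpl.
    destruct (classic (I01 x)) as [I|I].
    + destruct (Hz1 (Mf x I)) as [Iz Fz].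
      destruct (Rtotal_order z x) as [L|[E|L]]; auto.
      * pose proof (Fm _ _ Iz I L); lra.
      * pose proof (Fm _ _ I Iz L); lra.
    + replace (f x) with x in * by (symmetry; apply Of; auto). apply Hz2; auto.
Qed.

Lemma ind_local u v x : cont_on01 u -> cont_on01 v -> (forall x, I01 x -> v x = x \/ v x = u x) -> I01 x -> u x <> x ->
  exists d, 0 < d /\ forall y, I01 y -> Rabs (y - x) < d -> (v x = x -> v y = y) /\ (v x <> x -> v y = u y /\ v y <> y).
Proof.
  intros Cu Cv Hi Ix Nx.
  set (e := Rabs (u x - x)).
  assert (He : 0 < e) by (unfold e; apply Rabs_pos_lt; intro; apply Nx; lra).
  destruct (Cu x Ix (e/2) ltac:(lra)) as [d1 [D1 H1]].
  destruct (Cv x Ix (e/2) ltac:(lra)) as [d2 [D2 H2]].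
  exists (Rmin (Rmin d1 d2) (e/2)). split. repeat apply Rmin_glb_lt; lra.
  intros y Iy Hy.
  assert (Hy1 : Rabs (y - x) < d1) by (eapply Rlt_le_trans; [exact Hy|]; eapply Rle_trans; [apply Rmin_l|apply Rmin_l]).
  assert (Hy2 : Rabs (y - x) < d2) by (eapply Rlt_le_trans; [exact Hy|]; eapply Rle_trans; [apply Rmin_l|apply Rmin_r]).
  assert (Hy3 : Rabs (y - x) < e/2) by (eapply Rlt_le_trans; [exact Hy|]; apply Rmin_r).
  specialize (H1 y Iy Hy1). specialize (H2 y Iy Hy2).
  split.
  - intros Ev. destruct (Hi y Iy) as [E|E]; auto. exfalso.
    rewrite Ev in H2. rewrite E in H2.
    unfold e in *. clear Hy Hy1 Hy2 Hy3. rabs_all; lra.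
  - intros Ev. destruct (Hi x Ix) as [E|E]; [tauto|].
    assert (v y <> y).
    { intro Ey. rewrite Ey in H2. unfold e in *. rewrite E in H2.
      clear Hy Hy1 Hy2 H1. rabs_all; lra. }
    split; auto. destruct (Hi y Iy) as [E2|E2]; tauto.
Qed.

Definition ind_d (v u' : R -> R) := fun x => if Req_EM_T (v x) x then 1 else u' x.

Lemma ind_deriv u u' v : cont_on01 u -> has_deriv_on01 u u' -> (forall p, I01 p -> u p = p -> u' p = 1) -> cont_on01 v -> (forall x, I01 x -> v x = x \/ v x = u x) -> has_deriv_on01 v (ind_d v u').
Proof.
 intros Cu Du Fp Cv Hi x Ix eps He. unfold ind_d.
 destruct (Req_EM_T (u x) x) as [Ux|Ux].
 - assert (Vx: v x = x) by (destruct (Hi x Ix); congruence).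
   destruct (Req_EM_T (v x) x); [|tauto].
   destruct (Du x Ix eps He) as [d [Hd H]]. exists d; split; auto. intros y Iy Ny Hy.
   rewrite Fp in H; auto.
   destruct (Hi y Iy) as [E|E]; rewrite E, Vx.
   + replace ((y - x)/(y-x)) with 1 by (field; intro; apply Ny; lra). rewrite Rminus_diag, Rabs_R0; lra.
   + replace (u y - x) with (u y - u x) by (rewrite Ux; ring). apply H; auto.
 - destruct (ind_local u v x Cu Cv Hi Ix Ux) as [d0 [D0 L]].
   destruct (Req_EM_T (v x) x) as [Vx|Vx].
   + exists d0; split; auto. intros y Iy Ny Hy. destruct (L y Iy Hy) as [L1 _]. rewrite (L1 Vx), Vx.
     replace ((y - x)/(y-x)) with 1 by (field; intro; apply Ny; lra). rewrite Rminus_diag, Rabs_R0; lra.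
   + destruct (Du x Ix eps He) as [d [Hd H]]. exists (Rmin d d0). split. apply Rmin_glb_lt; auto.
     intros y Iy Ny Hy.
     destruct (L y Iy (Rlt_le_trans _ _ _ Hy (Rmin_r _ _))) as [_ L2]. destruct (L2 Vx) as [E _].
     assert (Ex : v x = u x) by (destruct (Hi x Ix); tauto).
     rewrite E, Ex. apply H; auto. exact (Rlt_le_trans _ _ _ Hy (Rmin_l _ _)).
Qed.

Lemma ind_cont u u' v : cont_on01 u -> cont_on01 u' -> (forall p, I01 p -> u p = p -> u' p = 1) -> cont_on01 v -> (forall x, I01 x -> v x = x \/ v x = u x) -> cont_on01 (ind_d v u').
Proof.
 intros Cu Cu' Fp Cv Hi x Ix eps He. unfold ind_d.
 destruct (Req_EM_T (u x) x) as [Ux|Ux].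
 - assert (Vx: v x = x) by (destruct (Hi x Ix); congruence).
   destruct (Req_EM_T (v x) x); [|tauto].
   destruct (Cu' x Ix eps He) as [d [Hd H]]. exists d; split; auto. intros y Iy Hy.
   rewrite Fp in H; auto.
   destruct (Req_EM_T (v y) y). rewrite Rminus_diag, Rabs_R0; lra. apply H; auto.
 - destruct (ind_local u v x Cu Cv Hi Ix Ux) as [d0 [D0 L]].
   destruct (Req_EM_T (v x) x) as [Vx|Vx].
   + exists d0; split; auto. intros y Iy Hy. destruct (L y Iy Hy) as [L1 _].
     destruct (Req_EM_T (v y) y); [|tauto]. rewrite Rminus_diag, Rabs_R0; lra.
   + destruct (Cu' x Ix eps He) as [d [Hd H]]. exists (Rmin d d0). split. apply Rmin_glb_lt; auto.
     intros y Iy Hy.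
     destruct (L y Iy (Rlt_le_trans _ _ _ Hy (Rmin_r _ _))) as [_ L2]. destruct (L2 Vx) as [_ E].
     destruct (Req_EM_T (v y) y); [tauto|]. apply H; auto. exact (Rlt_le_trans _ _ _ Hy (Rmin_l _ _)).
Qed.

Lemma deriv_id : has_deriv_on01 (fun x => x) (fun _ => 1).
Proof. intros x Ix eps He. exists 1. split; [lra|]. intros y Iy Ny Hy.
  replace ((y - x)/(y-x)) with 1 by (field; intro; apply Ny; lra). rewrite Rminus_diag, Rabs_R0; lra. Qed.

Lemma deriv_ext f g f' : (forall x, I01 x -> f x = g x) -> has_deriv_on01 f f' -> has_deriv_on01 g f'.
Proof. intros E H x Ix eps He. destruct (H x Ix eps He) as [d [Hd H']]. exists d; split; auto.
  intros y Iy Ny Hy. rewrite <- !E; auto. Qed.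

Lemma inv_deriv f f' k k' : has_deriv_on01 f f' -> has_deriv_on01 k k' -> (forall x, I01 x -> I01 (f x)) -> cont_on01 f ->
  (forall x, I01 x -> k (f x) = x) -> forall x, I01 x -> k' (f x) * f' x = 1.
Proof.
  intros Df Dk Mf Cf E x Ix.
  pose proof (chain f f' k k' Df Dk Mf Cf) as C.
  apply deriv_ext with (g := fun x => x) in C; auto.
  apply (deriv_unique _ _ _ C deriv_id x Ix).
Qed.

Lemma inv_unique f g k : inverse_pair f g -> inverse_pair f k -> g = k.
Proof. intros H1 H2. apply functional_extensionality; intro x.
  rewrite <- (proj1 (H2 x)) at 1. rewrite (proj2 (H1 (k x))). auto. Qed.

Lemma inv_swap f g : inverse_pair f g -> inverse_pair g f.
Proof. intros H x; split; apply H. Qed.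

Lemma diff1_homeo f : diff1_plus f -> homeo_plus f.
Proof. intros [H _]; auto. Qed.
Lemma diff1_C1 f : diff1_plus f -> C1_on01 f.
Proof. intros [_ [H _]]; auto. Qed.

Lemma diff1_inv f g : diff1_plus f -> inverse_pair f g -> diff1_plus g.
Proof.
  intros [Hf [Cf [k [Pk Ck]]]] P. rewrite <- (inv_unique _ _ _ Pk P) in *.
  split; [apply homeo_inv with f; auto|]. split; auto. exists f; split; auto. apply inv_swap; auto.
Qed.

Lemma diff1_comp f g : diff1_plus f -> diff1_plus g -> diff1_plus (fun x => f (g x)).
Proof.
  intros [Hf [Cf [fi [Pf Cfi]]]] [Hg [Cg [gi [Pg Cgi]]]].
  split; [apply homeo_comp; auto|]. split.
  - apply C1_comp; auto. apply homeo_maps; auto. apply Hg.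
  - exists (fun x => gi (fi x)). split.
    + intro x; split.
      * rewrite (proj1 (Pg _)), (proj1 (Pf _)); auto.
      * rewrite (proj2 (Pf _)), (proj2 (Pg _)); auto.
    + pose proof (homeo_inv _ _ Hf Pf) as Hfi. apply C1_comp; auto. apply homeo_maps; auto. apply Hfi.
Qed.

Lemma diff1_id : diff1_plus (fun x => x).
Proof.
  split; [|split].
  - split; [auto|split; [auto|split; [auto|split; [auto|split]]]].
    + intros x _ eps He; exists eps; split; auto.
    + intros y Hy; exists y; auto.
  - exists (fun _ => 1); split. apply deriv_id. intros x _ eps He; exists 1; split; [lra|]. intros; rewrite Rminus_diag, Rabs_R0; lra.
  - exists (fun x => x); split. intro; auto.
    exists (fun _ => 1); split. apply deriv_id. intros x _ eps He; exists 1; split; [lra|]. intros; rewrite Rminus_diag, Rabs_R0; lra.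
Qed.

Lemma C1_ex_deriv f : C1_on01 f -> exists f', has_deriv_on01 f f'.
Proof. intros [f' [H _]]; eauto. Qed.

Lemma abs_lt a e : Rabs a < e <-> -e < a < e.
Proof. split; intro H. - rabs_all; lra. - rabs_all; lra. Qed.

Lemma conv_comp u v : (forall n, homeo_plus (v n)) -> conv_C1_id u -> conv_C1_id v -> conv_C1_id (fun n x => u n (v n x)).
Proof.
  intros Hv [u' [Du Cu]] [v' [Dv Cv]].
  exists (fun n x => u' n (v n x) * v' n x). split.
  - intro n. apply chain; auto. apply homeo_maps; auto. apply (Hv n).
  - intros eps He. set (e := Rmin (eps/3) 1).
    assert (E1 : 0 < e) by (apply Rmin_glb_lt; lra). assert (E2 : e <= eps/3) by apply Rmin_l. assert (E3 : e <= 1) by apply Rmin_r.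
    destruct (Cu e E1) as [N1 H1]. destruct (Cv e E1) as [N2 H2].
    exists (max N1 N2). intros n Hn x Ix.
    assert (I2 : I01 (v n x)) by (apply homeo_maps; auto).
    destruct (H1 n ltac:(lia) (v n x) I2) as [A1 B1].
    destruct (H2 n ltac:(lia) x Ix) as [A2 B2].
    apply abs_lt in A1, B1, A2, B2. split; apply abs_lt.
    + lra.
    + set (a := u' n (v n x)) in *. set (b := v' n x) in *. split; nra.
Qed.

Lemma choice_nat (P : nat -> (R -> R) -> Prop) : (forall n, exists d, P n d) -> exists D : nat -> R -> R, forall n, P n (D n).
Proof. intros H. exists (fun n => proj1_sig (constructive_indefinite_description _ (H n))).
  intro n. destruct (constructive_indefinite_description _ (H n)); auto. Qed.

Lemma conv_inv u w : conv_C1_id u -> (forall n, homeo_plus (w n)) -> (forall n x, I01 x -> u n (w n x) = x) ->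
  (forall n, exists d, has_deriv_on01 (w n) d) -> conv_C1_id w.
Proof.
  intros [u' [Du Cu]] Hw E Dw. destruct (choice_nat _ Dw) as [w' Dw'].
  exists w'. split; auto.
  assert (K : forall n x, I01 x -> u' n (w n x) * w' n x = 1).
  { intros n x Ix. apply (inv_deriv (w n) (w' n) (u n) (u' n)); auto.
    - apply homeo_maps; auto.
    - apply Hw. }
  intros eps He. set (e := Rmin (eps/2) (1/2)).
  assert (E1 : 0 < e) by (apply Rmin_glb_lt; lra). assert (E2 : e <= eps/2) by apply Rmin_l. assert (E3 : e <= 1/2) by apply Rmin_r.
  destruct (Cu e E1) as [N H1]. exists N. intros n Hn x Ix.
  assert (I2 : I01 (w n x)) by (apply homeo_maps; auto).
  destruct (H1 n Hn (w n x) I2) as [A B]. rewrite E in A; auto.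
  pose proof (K n x Ix) as Kx.
  apply abs_lt in A, B. split; apply abs_lt.
  + lra.
  + set (a := u' n (w n x)) in *. set (b := w' n x) in *. split; nra.
Qed.

Lemma conv_ind u v : conv_C1_id u -> (forall n, cont_on01 (u n)) -> (forall n, cont_on01 (v n)) ->
  (forall n x, I01 x -> v n x = x \/ v n x = u n x) ->
  (forall n u', has_deriv_on01 (u n) u' -> forall p, I01 p -> u n p = p -> u' p = 1) -> conv_C1_id v.
Proof.
  intros [u' [Du Cu]] Cun Cvn Hi Fp.
  exists (fun n => ind_d (v n) (u' n)). split.
  - intro n. apply (ind_deriv (u n)); auto. apply Fp; auto.
  - intros eps He. destruct (Cu eps He) as [N H]. exists N. intros n Hn x Ix.
    destruct (H n Hn x Ix) as [A B]. unfold ind_d.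
    destruct (Req_EM_T (v n x) x) as [E|E].
    + rewrite E, !Rminus_diag, Rabs_R0. lra.
    + destruct (Hi n x Ix) as [E2|E2]; [tauto|]. rewrite E2. auto.
Qed.

Definition HH (h hinv : nat -> R -> R) := (forall n, diff1_plus (h n)) /\ (forall n, inverse_pair (h n) (hinv n)).

Lemma hinv_diff h hinv : HH h hinv -> forall n, diff1_plus (hinv n).
Proof. intros [A B] n. apply diff1_inv with (h n); auto. Qed.

Lemma conj_homeo h hinv g : HH h hinv -> homeo_plus g -> forall n, homeo_plus (fun x => h n (g (hinv n x))).
Proof. intros HHh Hg n. pose proof (hinv_diff _ _ HHh n) as Hi. destruct HHh as [A B].
  apply homeo_comp. apply diff1_homeo; auto. apply homeo_comp; auto. apply diff1_homeo; auto. Qed.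

Lemma conj_C1 h hinv g : HH h hinv -> homeo_plus g -> C1_on01 g -> forall n, C1_on01 (fun x => h n (g (hinv n x))).
Proof. intros HHh Hg Cg n. pose proof (hinv_diff _ _ HHh n) as Hi. destruct HHh as [A B].
  apply (C1_comp (fun x => g (hinv n x)) (h n)).
  - apply C1_comp; auto. apply diff1_C1; auto. apply homeo_maps, diff1_homeo; auto. apply (diff1_homeo _ Hi).
  - apply diff1_C1; auto.
  - apply homeo_maps. apply homeo_comp; auto. apply diff1_homeo; auto.
  - apply (homeo_comp g (hinv n)); auto. apply diff1_homeo; auto.
Qed.

Lemma conj_fp h hinv g g' u' n p : HH h hinv -> homeo_plus g -> has_deriv_on01 g g' ->
  has_deriv_on01 (fun x => h n (g (hinv n x))) u' -> I01 p -> g p = p -> u' (h n p) = g' p.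
Proof.
  intros HHh Hg Dg Du Ip Gp.
  pose proof (hinv_diff _ _ HHh n) as Hi. destruct HHh as [A B].
  destruct (C1_ex_deriv _ (diff1_C1 _ (A n))) as [H' DH].
  destruct (C1_ex_deriv _ (diff1_C1 _ Hi)) as [K' DK].
  pose proof (diff1_homeo _ (A n)) as Hh. pose proof (diff1_homeo _ Hi) as Hhi.
  assert (D1 : has_deriv_on01 (fun x => g (hinv n x)) (fun x => g' (hinv n x) * K' x)).
  { apply chain; auto. apply homeo_maps; auto. apply Hhi. }
  assert (D2 : has_deriv_on01 (fun x => h n (g (hinv n x))) (fun x => H' (g (hinv n x)) * (g' (hinv n x) * K' x))).
  { apply (chain (fun x => g (hinv n x)) _ (h n)); auto. apply homeo_maps, homeo_comp; auto. apply (homeo_comp g (hinv n)); auto. }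
  assert (Ihp : I01 (h n p)) by (apply homeo_maps; auto).
  rewrite (deriv_unique _ _ _ Du D2 _ Ihp).
  assert (Kp : K' (h n p) * H' p = 1).
  { apply (inv_deriv (h n) H' (hinv n) K'); auto. apply homeo_maps; auto. apply Hh. intros; apply B. }
  rewrite (proj2 (B n p)), Gp.
  replace (H' p * (g' p * K' (h n p))) with (g' p * (K' (h n p) * H' p)) by ring. rewrite Kp; ring.
Qed.

Lemma GH_fp h hinv g g' p : HH h hinv -> G_H h hinv g -> has_deriv_on01 g g' -> I01 p -> g p = p -> g' p = 1.
Proof.
  intros HHh [Dg [u' [Du Cu]]] Dg' Ip Gp.
  assert (Eq : forall n, u' n (h n p) = g' p).
  { intro n. apply conj_fp with hinv g; auto. apply diff1_homeo; auto. }
  destruct (Req_EM_T (g' p) 1) as [E|E]; auto. exfalso.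
  assert (0 < Rabs (g' p - 1)) by (apply Rabs_pos_lt; intro; apply E; lra).
  destruct (Cu _ H) as [N HN].
  assert (I01 (h N p)) by (apply homeo_maps; auto; apply diff1_homeo; apply HHh).
  destruct (HN N (le_n _) (h N p) H0) as [_ B]. rewrite Eq in B. lra.
Qed.

Lemma GH_conj_fp h hinv g n u' q : HH h hinv -> G_H h hinv g -> has_deriv_on01 (fun x => h n (g (hinv n x))) u' ->
  I01 q -> h n (g (hinv n q)) = q -> u' q = 1.
Proof.
  intros HHh Gg Du Iq Fq. pose proof Gg as [Dg _].
  destruct (C1_ex_deriv _ (diff1_C1 _ Dg)) as [g' Dg'].
  set (p := hinv n q).
  assert (Ip : I01 p) by (apply (homeo_maps (hinv n)); auto; apply diff1_homeo; apply (hinv_diff h); auto).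
  assert (Gp : g p = p).
  { unfold p. rewrite <- (proj2 (proj2 HHh n (g (hinv n q)))). rewrite Fq. auto. }
  assert (Hq : h n p = q) by (unfold p; apply (proj2 HHh n)).
  rewrite <- Hq. rewrite (conj_fp h hinv g g' u' n p); auto. apply GH_fp with h hinv g; auto.
  apply diff1_homeo; auto.
Qed.

Lemma homeo_cont f : homeo_plus f -> cont_on01 f.
Proof. intros [_ [_ [_ [_ [H _]]]]]; auto. Qed.

Lemma GH_id h hinv : HH h hinv -> G_H h hinv (fun x => x).
Proof.
  intros HHh. split. apply diff1_id. exists (fun _ _ => 1). split.
  - intro n. apply deriv_ext with (fun x => x). intros; symmetry; apply (proj2 HHh n). apply deriv_id.
  - intros eps He. exists O. intros n _ x Ix. rewrite (proj1 (proj2 HHh n x)), !Rminus_diag, Rabs_R0. lra.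
Qed.

Lemma GH_comp h hinv f g : HH h hinv -> G_H h hinv f -> G_H h hinv g -> G_H h hinv (fun x => f (g x)).
Proof.
  intros HHh [Df Cf] [Dg Cg]. split. apply diff1_comp; auto.
  replace (fun n x => h n ((fun x0 => f (g x0)) (hinv n x))) with
    (fun n x => (fun n y => h n (f (hinv n y))) n ((fun n y => h n (g (hinv n y))) n x)).
  - apply (conv_comp (fun n y => h n (f (hinv n y))) (fun n y => h n (g (hinv n y)))); auto. intro n; apply conj_homeo; auto. apply diff1_homeo; auto.
  - apply functional_extensionality; intro n; apply functional_extensionality; intro x.
    simpl. rewrite (proj2 (proj2 HHh n _)). auto.
Qed.

Lemma GH_inv h hinv f g : HH h hinv -> G_H h hinv f -> inverse_pair f g -> G_H h hinv g.
Proof.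
  intros HHh [Df Cf] P. assert (Dg : diff1_plus g) by (apply diff1_inv with f; auto).
  split; auto.
  apply (conv_inv (fun n y => h n (f (hinv n y)))); auto.
  - intro n; apply conj_homeo; auto. apply diff1_homeo; auto.
  - intros n x Ix. rewrite (proj2 (proj2 HHh n _)), (proj1 (P _)), (proj1 (proj2 HHh n _)). auto.
  - intro n. destruct (conj_C1 h hinv g HHh (diff1_homeo _ Dg) (diff1_C1 _ Dg) n) as [d [D _]]. eauto.
Qed.

Lemma ind_C1 h hinv g v : HH h hinv -> G_H h hinv g -> homeo_plus v -> (forall x, I01 x -> v x = x \/ v x = g x) -> C1_on01 v.
Proof.
  intros HHh Gg Hv Hi. pose proof Gg as [Dg _].
  destruct (diff1_C1 _ Dg) as [g' [Dg' Cg']].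
  exists (ind_d v g'). split.
  - apply (ind_deriv g); auto. apply homeo_cont, diff1_homeo; auto.
    intros p Ip Gp. apply (GH_fp h hinv g g' p); auto. apply homeo_cont; auto.
  - apply (ind_cont g); auto. apply homeo_cont, diff1_homeo; auto.
    intros p Ip Gp. apply (GH_fp h hinv g g' p); auto. apply homeo_cont; auto.
Qed.

Lemma GH_ind h hinv g v : HH h hinv -> G_H h hinv g -> induced v g -> G_H h hinv v.
Proof.
  intros HHh Gg [Hv Hi]. pose proof Gg as [Dg Cg].
  split.
  - split; auto. split. apply (ind_C1 h hinv g); auto.
    destruct (homeo_has_inv v Hv) as [k Pk]. exists k; split; auto.
    destruct Dg as [Hg [C1g [gi [Pg Cgi]]]].
    assert (Ggi : G_H h hinv gi) by (apply GH_inv with g; auto).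
    pose proof (homeo_inv _ _ Hv Pk) as Hk.
    apply (ind_C1 h hinv gi); auto.
    intros y Iy. assert (Ix : I01 (k y)) by (apply homeo_maps; auto).
    destruct (Hi (k y) Ix) as [E|E]; rewrite (proj1 (Pk y)) in E.
    + left; auto.
    + right. pose proof (proj2 (Pg (k y))) as HH0. rewrite <- E in HH0. auto.
  - apply (conv_ind (fun n y => h n (g (hinv n y)))); auto.
    + intro n; apply homeo_cont, conj_homeo, diff1_homeo; auto.
    + intro n; apply homeo_cont, conj_homeo; auto.
    + intros n x Ix. assert (I01 (hinv n x)) by (apply homeo_maps; [apply diff1_homeo; apply (hinv_diff h); auto | auto]).
      destruct (Hi _ H) as [E|E]; rewrite E; [left; apply (proj2 HHh n) | right; auto].
    + intros n u' Du p Ip Fp. apply (GH_conj_fp h hinv g n u' p); auto.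
Qed.

Theorem corollaryc (G : (R -> R) -> Prop) (h hinv : nat -> R -> R)
  (HGgrp : is_group G) (HGdiff : forall g, G g -> diff1_plus g)
  (Hh : forall n, diff1_plus (h n))
  (Hhinv : forall n, inverse_pair (h n) (hinv n))
  (Hconv : forall g, G g -> conv_C1_id (fun n x => h n (g (hinv n x)))) :
  (forall f, I_inf G f -> G_H h hinv f) /\
  is_group (I_inf G) /\ (forall f, I_inf G f -> diff1_plus f) /\
  C1_close_to_id (I_inf G).
Proof.
  assert (HHh : HH h hinv) by (split; auto).
  assert (Main : forall n f, I_iter n G f -> G_H h hinv f).
  { induction n; simpl.
    - intros f Hf; split; auto.
    - intros f Hf. induction Hf.
      + destruct H as [g [Gg Ind]]. apply GH_ind with g; auto.
      + apply GH_id; auto.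
      + apply GH_comp; auto.
      + apply GH_inv with f; auto.
      + replace g with f; auto. apply functional_extensionality; auto. }
  assert (Up : forall n f, I_iter n G f -> I_iter (S n) G f).
  { intros n f Hf. simpl. apply gen_base. exists f. split; auto.
    split. apply diff1_homeo. apply (Main n f Hf). intros; right; auto. }
  assert (Le : forall n m f, (n <= m)%nat -> I_iter n G f -> I_iter m G f).
  { intros n m f Hnm. induction Hnm; auto. }
  assert (M1 : forall f, I_inf G f -> G_H h hinv f).
  { intros f [n Hf]. apply (Main n); auto. }
  assert (Grp : is_group (I_inf G)).
  { destruct HGgrp as [Gid _]. split; [|split].
    - exists O. simpl. auto.
    - intros f g [n1 H1] [n2 H2]. exists (S (max n1 n2)). simpl. apply gen_comp.
      + apply gen_base. exists f. split. apply Le with n1; [lia|auto]. split. apply diff1_homeo, (Main n1); auto. intros; right; auto.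
      + apply gen_base. exists g. split. apply Le with n2; [lia|auto]. split. apply diff1_homeo, (Main n2); auto. intros; right; auto.
    - intros f [n Hf]. destruct (homeo_has_inv f) as [g Pg]. apply diff1_homeo, (Main n); auto.
      exists g. split; auto. exists (S n). simpl. apply gen_inv with f; auto. apply (Up n f Hf). }
  split; [auto|split; [auto|split]].
  - intros f Hf. apply (M1 f Hf).
  - exists h, hinv. split; [auto|split; [auto|]]. intros g Hg. apply (M1 g Hg).
Qed.
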